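(* Consider the uplink system described in the context, with $U$ users, user $u$ having $N_u$ transmit antennas, $L_u$ propagation paths, power budget $P_u>0$ and aperture $W_u>0$. Let $C^*$ denote the supremum of $$C(\mathbf Q_1,\dots,\mathbf Q_U,\mathbf w_1,\dots,\mathbf w_U)=\log\Big|\sum_{u=1}^U \mathbf G_u(\mathbf w_u)\mathbf Q_u\mathbf G_u^H(\mathbf w_u)+\mathbf I_M\Big|$$ over all $\mathbf Q_u\in\mathbb C^{N_u\times N_u}$ with $\mathbf Q_u\succeq \mathbf 0$, $\mathrm{tr}(\mathbf Q_u)\le P_u$, and all $\mathbf w_u=[w_{u,1},\dots,w_{u,N_u}]^T$ with $0\le w_{u,n}\le W_u$ and $w_{u,n}\neq w_{u,n'}$ for $n\ne n'$ ($u=1,\dots,U$). Then $C^*$ is upper bounded by the optimal value of the convex problem $$\max_{\tilde{\mathbf Q}_1,\dots,\tilde{\mathbf Q}_U}\ \log\Big|\sum_{u=1}^U M N_u \mathbf A_{u,\mathrm R}\boldsymbol\Gamma_u\tilde{\mathbf Q}_u\boldsymbol\Gamma_u^H\mathbf A_{u,\mathrm R}^H+\mathbf I_M\Big|\quad\text{s.t. } \tilde{\mathbf Q}_u\in\mathbb C^{L_u\times L_u},\ \tilde{\mathbf Q}_u\succeq\mathbf 0,\ \mathrm{tr}(\tilde{\mathbf Q}_u)\le L_uP_u,\ u=1,\dots,U.$$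
   Context: A base station (BS) has an $M$-antenna uniform linear array with spacing $d=\lambda/2$ ($\lambda$ the wavelength). User $u\in\{1,\dots,U\}$ has $N_u$ antennas placed at positions $w_{u,1},\dots,w_{u,N_u}\in[0,W_u]$ on a line. There are $L_u$ propagation paths between user $u$ and the BS, with complex gains $\gamma_{u,1},\dots,\gamma_{u,L_u}$, angles of arrival $\beta_{u,l}\in[0,\pi]$ and angles of departure $\theta_{u,l}\in[0,\pi]$. Define $\mathbf a_{u,\mathrm R}(\beta)=\frac1{\sqrt M}[1,e^{-j\frac{2\pi}{\lambda}d\cos\beta},\dots,e^{-j\frac{2\pi}{\lambda}(M-1)d\cos\beta}]^T$ and $\mathbf a_{u,\mathrm T}(\theta,\mathbf w_u)=\frac1{\sqrt{N_u}}[e^{-j\frac{2\pi}{\lambda}w_{u,1}\cos\theta},\dots,e^{-j\frac{2\pi}{\lambda}w_{u,N_u}\cos\theta}]^T$. Let $\boldsymbol\Gamma_u=\mathrm{diag}(\gamma_{u,1},\dots,\gamma_{u,L_u})$, $\mathbf A_{u,\mathrm R}=[\mathbf a_{u,\mathrm R}(\beta_{u,1}),\dots,\mathbf a_{u,\mathrm R}(\beta_{u,L_u})]\in\mathbb C^{M\times L_u}$, $\mathbf A_{u,\mathrm T}(\mathbf w_u)=[\mathbf a_{u,\mathrm T}(\theta_{u,1},\mathbf w_u),\dots,\mathbf a_{u,\mathrm T}(\theta_{u,L_u},\mathbf w_u)]\in\mathbb C^{N_u\times L_u}$, and the channel matrix $\mathbf G_u(\mathbf w_u)=\sqrt{MN_u}\,\mathbf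 A_{u,\mathrm R}\boldsymbol\Gamma_u\mathbf A_{u,\mathrm T}^H(\mathbf w_u)\in\mathbb C^{M\times N_u}$. $|\cdot|$ denotes determinant. *)

(* Defs.v *)
From HB Require Import structures.
From mathcomp Require Import all_boot all_order all_algebra.
From mathcomp Require Import all_classical all_reals all_analysis.
From mathcomp Require Import complex.
Set Implicit Arguments. Unset Strict Implicit. Unset Printing Implicit Defensive.
Import Order.TTheory GRing.Theory Num.Theory.
Local Open Scope ring_scope.
Local Open Scope complex_scope.

Section Defs.
Variable R : realType.
Local Notation C := R[i].

Definition ctmx m n (A : 'M[C]_(m, n)) : 'M[C]_(n, m) := (map_mx Num.conj A)^T.

Definition psd n (Q : 'M[C]_n) : Prop :=
  ctmx Q = Q /\ forall x : 'cV[C]_n, 0 <= (ctmx x *m Q *m x) 0 0.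

Definition expj (t : R) : C := (cos t) +i* (sin t).

(* receive steering vector a_R(beta), antenna spacing d, wavelength lam *)
Definition aR (M : nat) (lam d beta : R) : 'cV[C]_M :=
  \col_(m < M) (((Num.sqrt (M%:R : R))^-1)%:C
                 * expj (- (2 * pi / lam * (m%:R * d) * cos beta))).

Definition aT (N : nat) (lam : R) (w : 'I_N -> R) (theta : R) : 'cV[C]_N :=
  \col_(n < N) (((Num.sqrt (N%:R : R))^-1)%:C
                 * expj (- (2 * pi / lam * w n * cos theta))).

Definition ARmx (M L : nat) (lam d : R) (beta : 'I_L -> R) : 'M[C]_(M, L) :=
  \matrix_(m < M, l < L) aR M lam d (beta l) m 0.

Definition ATmx (N L : nat) (lam : R) (w : 'I_N -> R) (theta : 'I_L -> R)
  : 'M[C]_(N, L) := \matrix_(n < N, l < L) aT lam w (theta l) n 0.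

Definition Gammamx (L : nat) (gamma : 'I_L -> C) : 'M[C]_L :=
  diag_mx (\row_(l < L) gamma l).

Definition Gch (M N L : nat) (lam : R) (gamma : 'I_L -> C) (beta theta : 'I_L -> R)
  (w : 'I_N -> R) : 'M[C]_(M, N) :=
  (Num.sqrt ((M * N)%:R : R))%:C *:
    (ARmx M lam (lam / 2) beta *m Gammamx gamma *m ctmx (ATmx lam w theta)).

(* log of determinant; the matrices involved are Hermitian PD, so the
   determinant is real positive and we take ln of its real part *)
Definition logdet M (A : 'M[C]_M) : R := ln (complex.Re (\det A)).

End Defs.

(* Main.v *)
Require Import Defs.
From HB Require Import structures.
From mathcomp Require Import all_boot all_order all_algebra.
From mathcomp Require Import all_classical all_reals all_analysis.
From mathcomp Require Import complex.
From mathcomp Require Import ring.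
Import Order.TTheory GRing.Theory Num.Theory.
Local Open Scope ring_scope.
Local Open Scope complex_scope.
Section S.
Variable R : realType.
Local Notation C := R[i].

Lemma ctmxM m n p (A : 'M[C]_(m, n)) (B : 'M[C]_(n, p)) :
  ctmx (A *m B) = ctmx B *m ctmx A.
Proof. by rewrite /ctmx map_mxM trmx_mul. Qed.

Lemma ctmxK m n (A : 'M[C]_(m, n)) : ctmx (ctmx A) = A.
Proof. by apply/matrixP => i j; rewrite !mxE conjCK. Qed.

Lemma ctmxB m n (A B : 'M[C]_(m, n)) : ctmx (A - B) = ctmx A - ctmx B.
Proof. by apply/matrixP => i j; rewrite !mxE rmorphB. Qed.

Lemma ctmxZ m n a (A : 'M[C]_(m, n)) : ctmx (a *: A) = a^* *: ctmx A.
Proof. by apply/matrixP => i j; rewrite !mxE rmorphM. Qed.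

Lemma ctmx_delta n (i : 'I_n) : ctmx (delta_mx i 0 : 'cV[C]_n) = delta_mx 0 i.
Proof.
apply/matrixP => a b; rewrite !mxE.
by case: (a == 0) ; case: (b == i) => /=; rewrite ?conjC1 ?conjC0.
Qed.

Lemma qf_delta n (Q : 'M[C]_n) (i j : 'I_n) :
  ((delta_mx 0 i : 'rV[C]_n) *m Q *m (delta_mx j 0 : 'cV[C]_n)) 0 0 = Q i j.
Proof. by rewrite -rowE -colE !mxE. Qed.

Lemma qfE n (Q : 'M[C]_n) (x y : 'cV[C]_n) :
  (ctmx x *m Q *m y) 0 0 = \sum_i \sum_j (x i 0)^* * Q i j * y j 0.
Proof.
rewrite mxE exchange_big /=; apply: eq_bigr => j _.
rewrite mxE big_distrl /=; apply: eq_bigr => i _.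
by rewrite !mxE.
Qed.

Lemma qf_pair n (Q : 'M[C]_n) (x : 'cV[C]_n) i j :
  let w : 'cV[C]_n := x i 0 *: delta_mx i 0 - x j 0 *: delta_mx j 0 in
  (ctmx w *m Q *m w) 0 0 =
   (x i 0)^* * x i 0 * Q i i - (x i 0)^* * x j 0 * Q i j
   - (x j 0)^* * x i 0 * Q j i + (x j 0)^* * x j 0 * Q j j.
Proof.
move=> w; rewrite /w ctmxB !ctmxZ !ctmx_delta.
rewrite !(mulmxBl, mulmxBr) -!scalemxAl -!scalemxAr -!rowE -!colE !mxE.
ring.
Qed.

Lemma aux_le (S T : C) n : 0 <= S *+ n - T - T + S *+ n -> T <= n%:R * S.
Proof.
move=> H; have E : (n%:R * S - T) *+ 2 = S *+ n - T - T + S *+ n by ring.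
by rewrite -subr_ge0 -(pmulrn_lge0 _ (ltn0Sn 1)) E.
Qed.

Lemma psd_quad_le n (Q : 'M[C]_n) (x : 'cV[C]_n) : psd Q ->
  (ctmx x *m Q *m x) 0 0 <= n%:R * \sum_i ((x i 0)^* * x i 0 * Q i i).
Proof.
move=> [_ HQ].
have H : 0 <= \sum_i \sum_j
   ((x i 0)^* * x i 0 * Q i i - (x i 0)^* * x j 0 * Q i j
   - (x j 0)^* * x i 0 * Q j i + (x j 0)^* * x j 0 * Q j j).
  apply: sumr_ge0 => i _; apply: sumr_ge0 => j _; rewrite -qf_pair; exact: HQ.
have E : \sum_i \sum_j
   ((x i 0)^* * x i 0 * Q i i - (x i 0)^* * x j 0 * Q i j
   - (x j 0)^* * x i 0 * Q j i + (x j 0)^* * x j 0 * Q j j)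
   = (\sum_i ((x i 0)^* * x i 0 * Q i i)) *+ n - (ctmx x *m Q *m x) 0 0 - (ctmx x *m Q *m x) 0 0 + (\sum_i ((x i 0)^* * x i 0 * Q i i)) *+ n.
  rewrite qfE.
  under eq_bigr => i _ do rewrite big_split /= sumrB sumrB /= sumr_const card_ord.
  rewrite big_split /= sumrB sumrB /=.
  rewrite [X in _ - _ - X + _]exchange_big /=.
  rewrite sumr_const card_ord -sumrMnl.
  have -> : \sum_i \sum_j (x i 0)^* * x j 0 * Q i j =
            \sum_i \sum_j (x i 0)^* * Q i j * x j 0.
    by apply: eq_bigr => i _; apply: eq_bigr => j _; rewrite mulrAC.
  by [].
by move: H; rewrite E; apply: aux_le.
Qed.

Lemma norm_expj (t : R) : `|expj t| = 1.
Proof. by rewrite normc_def /= cos2Dsin2 sqrtr1. Qed.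

Lemma norm_realC (r : R) : `|r%:C| = `|r|%:C.
Proof. by rewrite normc_def /= expr0n /= addr0 sqrtr_sqr. Qed.

Lemma aT_unit N lam (w : 'I_N -> R) th (i : 'I_N) :
  N%:R * ((aT lam w th i 0)^* * aT lam w th i 0) = 1.
Proof.
rewrite mxE [_^* * _]mulrC -normCK normrM norm_expj mulr1 norm_realC.
have Npos : (0 < N)%N := leq_ltn_trans (leq0n i) (ltn_ord i).
have s0 : 0 < Num.sqrt (N%:R : R) by rewrite sqrtr_gt0 ltr0n.
rewrite ger0_norm ?invr_ge0 ?ltW // -rmorphXn /= exprVn sqr_sqrtr ?ler0n //.
rewrite -(rmorph_nat (real_complex R)) -rmorphM /= mulrV ?unitfE ?pnatr_eq0 -?lt0n //.
Qed.

Lemma psd_congr n m (Q : 'M[C]_n) (A : 'M[C]_(n, m)) :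
  psd Q -> psd (ctmx A *m Q *m A).
Proof.
move=> [HQ1 HQ2]; split.
  by rewrite !ctmxM ctmxK HQ1 mulmxA.
move=> x; have := HQ2 (A *m x).
by rewrite ctmxM !mulmxA.
Qed.

Lemma tr_congr n m (Q : 'M[C]_n) (A : 'M[C]_(n, m)) :
  \tr (ctmx A *m Q *m A) = \sum_l (ctmx (col l A) *m Q *m col l A) 0 0.
Proof.
apply: eq_bigr => l _; rewrite qfE mxE exchange_big /=; apply: eq_bigr => j _.
rewrite mxE big_distrl /=; apply: eq_bigr => i _.
by rewrite !mxE.
Qed.

Lemma tr_bound N L lam (w : 'I_N -> R) (th : 'I_L -> R) (Q : 'M[C]_N) (P : R) :
  psd Q -> \tr Q <= P%:C ->
  \tr (ctmx (ATmx lam w th) *m Q *m ATmx lam w th) <= (L%:R * P)%:C.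
Proof.
move=> HQ HP; rewrite tr_congr.
apply: (@le_trans _ _ (\sum_(l < L) \tr Q)).
  apply: ler_sum => l _; apply: le_trans (psd_quad_le _ _ (col l (ATmx lam w th)) HQ) _.
  rewrite mulr_sumr le_eqVlt; apply/orP; left; apply/eqP/eq_bigr => i _.
  have au := aT_unit N lam w (th l) i; rewrite mxE in au.
  by rewrite !mxE mulrA au mul1r.
rewrite sumr_const card_ord rmorphM /= (rmorph_nat (real_complex R)) -[_ *+ L]mulr_natl.
by apply: ler_wpM2l => //; rewrite ler0n.
Qed.

Lemma G_term M N L lam (gamma : 'I_L -> C) (beta theta : 'I_L -> R)
  (w : 'I_N -> R) (Q : 'M[C]_N) :
  Gch M lam gamma beta theta w *m Q *m ctmx (Gch M lam gamma beta theta w) =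
  ((M * N)%:R : C) *: (ARmx M lam (lam / 2) beta *m Gammamx gamma
     *m (ctmx (ATmx lam w theta) *m Q *m ATmx lam w theta)
     *m ctmx (Gammamx gamma) *m ctmx (ARmx M lam (lam / 2) beta)).
Proof.
rewrite /Gch ctmxZ !ctmxM ctmxK.
set s := Num.sqrt _.
have cs : Num.conj (s%:C) = s%:C := conjc_real s.
rewrite cs -!scalemxAl -scalemxAr scalerA -rmorphM /=.
have -> : s * s = (M * N)%:R by rewrite -expr2 sqr_sqrtr // ler0n.
rewrite (rmorph_nat (real_complex R)); congr (_ *: _).
by rewrite !mulmxA.
Qed.
End S.

Theorem theorem1 (R : realType) (M U : nat) (N L : 'I_U -> nat)
  (lam : R) (P W : 'I_U -> R)
  (gamma : forall u : 'I_U, 'I_(L u) -> R[i])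
  (beta theta : forall u : 'I_U, 'I_(L u) -> R) :
  0 < lam ->
  (forall u, 0 < P u) -> (forall u, 0 < W u) ->
  (forall u l, 0 <= beta u l <= pi) -> (forall u l, 0 <= theta u l <= pi) ->
  (ereal_sup [set r : \bar R | exists (Q : forall u : 'I_U, 'M[R[i]]_(N u))
                                     (w : forall u : 'I_U, 'I_(N u) -> R),
      [/\ forall u, (psd (Q u) /\ \tr (Q u) <= (P u)%:C)%R,
          forall u, ((forall n, 0 <= w u n <= W u) /\ injective (w u))%R &
          r = (logdet
                (\sum_(u < U) (Gch M lam (gamma u) (beta u) (theta u) (w u) *m Q u
                   *m ctmx (Gch M lam (gamma u) (beta u) (theta u) (w u)))
                 + 1%:M))%:E]]
   <=
   ereal_sup [set r : \bar R | exists (Qt : forall u : 'I_U, 'M[R[i]]_(L u)),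
      (forall u, psd (Qt u) /\ \tr (Qt u) <= ((L u)%:R * P u)%:C)%R /\
      r = (logdet
        (\sum_(u < U) ((M * N u)%:R : R[i]) *:
             (ARmx M lam (lam / 2) (beta u) *m Gammamx (gamma u) *m Qt u
              *m ctmx (Gammamx (gamma u)) *m ctmx (ARmx M lam (lam / 2) (beta u)))
         + 1%:M))%:E])%E.
Proof.
move=> _ _ _ _ _.
apply: ereal_sup_le => r [Q [w [HQ Hw ->]]].
exists (fun u => ctmx (ATmx lam (w u) (theta u)) *m Q u *m ATmx lam (w u) (theta u)).
split.
  move=> u; have [h1 h2] := HQ u; split; [exact: psd_congr | exact: tr_bound].
congr (_%:E); congr (logdet _); congr (_ + _); apply: eq_bigr => u _.
exact: G_term.
Qed.
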